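(* Let $n \geq 1$ and $m \geq 1$ be integers. The corona graph $P_n \circ P_m$ is a total edge product cordial graph, except when $n = m = 1$ (in which case it is not).
   Context: All graphs are finite and simple. $P_k$ denotes the path on $k$ vertices. For graphs $G$ and $H$ with $V(G)=\{u_1,\dots,u_n\}$, the corona graph $G \circ H$ is obtained by taking one copy of $G$ and $n$ disjoint copies $H^1,\dots,H^n$ of $H$, and joining each vertex $u_i$ by an edge to every vertex of $H^i$. Given an edge labeling $f^*: E(G) \to \{0,1\}$, the induced vertex labeling $f: V(G)\to\{0,1\}$ is $f(v) = \prod\{f^*(uv) : uv \in E(G)\}$ (product of the labels of edges incident to $v$). Let $v_f(i)$ be the number of vertices with $f(v)=i$ and $e_f(i)$ the number of edges with $f^*(e)=i$, for $i=0,1$. The labeling $f^*$ is a total edge product cordial labeling if $|(v_f(0)+e_f(0)) - (v_f(1)+e_f(1))| \leq 1$, and a graph is total edge product cordial if it admits such a labeling. *)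

(* Defs.v *)
From mathcomp Require Import all_boot.
Set Implicit Arguments. Unset Strict Implicit. Unset Printing Implicit Defensive.

(* A finite simple graph is given by a vertex finType T and a symmetric,
   irreflexive adjacency relation adj : rel T. *)

Definition path_adj (k : nat) : rel 'I_k :=
  fun i j => (i.+1 == j :> nat) || (j.+1 == i :> nat).

(* Corona G o H: vertices of G (inl u) plus one copy of H for each vertex u
   of G (inr (u, h)); u is joined to every vertex of its copy H^u. *)
Definition corona_adj (T U : finType) (G : rel T) (H : rel U) : rel (T + T * U) :=
  fun x y =>
    match x, y with
    | inl u, inl v => G u v
    | inr (u, a), inr (v, b) => (u == v) && H a b
    | inl u, inr (v, _) => u == v
    | inr (u, _), inl v => u == v
    end.

Definition edges (T : finType) (adj : rel T) : {set {set T}} :=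
  [set e : {set T} | [exists x : T, exists y : T, adj x y && (e == [set x; y])]].

(* Induced vertex label: product (over {0,1}, i.e. conjunction) of the labels
   of the edges incident to v. *)
Definition vlab (T : finType) (adj : rel T) (f : {set T} -> bool) (v : T) : bool :=
  \big[andb/true]_(e in edges adj | v \in e) f e.

Definition v_f (T : finType) (adj : rel T) (f : {set T} -> bool) (i : bool) : nat :=
  #|[set v : T | vlab adj f v == i]|.

Definition e_f (T : finType) (adj : rel T) (f : {set T} -> bool) (i : bool) : nat :=
  #|[set e in edges adj | f e == i]|.

(* f is a total edge product cordial labeling:
   |(v_f(0)+e_f(0)) - (v_f(1)+e_f(1))| <= 1  (false = 0, true = 1). *)
Definition tepc_labeling (T : finType) (adj : rel T) (f : {set T} -> bool) : Prop :=
  let a := v_f adj f false + e_f adj f false in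
  let b := v_f adj f true + e_f adj f true in
  (a <= b + 1) /\ (b <= a + 1).

Definition tepc_graph (T : finType) (adj : rel T) : Prop :=
  exists f : {set T} -> bool, tepc_labeling adj f.

(* Main.v *)
Require Import Defs.
From mathcomp Require Import all_boot.
From mathcomp Require Import zify.
Set Implicit Arguments. Unset Strict Implicit. Unset Printing Implicit Defensive.

Lemma subset_interval_ (U : finType) (A B : {set U}) k :
  A \subset B -> #|A| <= k <= #|B| -> exists2 H : {set U}, (A \subset H) && (H \subset B) & #|H| = k.
Proof.
move=> sAB /andP[]; move Hd: (k - #|A|) => d; elim: d k Hd => [|d IH] k Hd h1 h2.
  exists A; first by rewrite subxx sAB.
  apply/eqP; rewrite eqn_leq h1; lia.
have [|||H /andP[sAH sHB] cH] := IH k.-1; try lia.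
have : H \proper B by rewrite properEcard sHB; lia.
case/properP => _ [z zB zH].
exists (z |: H); last by rewrite cardsU1 zH cH; lia.
rewrite (subset_trans sAH (subsetUr _ _)) /=.
by apply/subsetP => y; rewrite !inE => /orP[/eqP -> //| ]; apply: (subsetP sHB).
Qed.

Section Generic.
Variable T : finType.
Variable adj : rel T.

Definition Ein (W : {set T}) := [set e in edges adj | e \subset W].
Definition cover (F : {set {set T}}) := [set v | [exists e in F, v \in e]].
Definition Reach (c : nat) := exists F : {set {set T}}, F \subset edges adj /\ #|F| + #|cover F| = c.

Lemma ef_sum f : e_f adj f true + e_f adj f false = #|edges adj|.
Proof.
rewrite -(cardsID [set e | f e] (edges adj)) /e_f; congr (_ + _);
  apply: eq_card => e; rewrite !inE; by case: (f e); rewrite ?andbT ?andbF.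
Qed.

Lemma vf_sum f : v_f adj f true + v_f adj f false = #|T|.
Proof.
rewrite -(cardsC [set v | vlab adj f v == true]) /v_f; congr (_ + _).
apply: eq_card => v; rewrite !inE; by case: (vlab adj f v).
Qed.

Lemma vlabF (F : {set {set T}}) v : F \subset edges adj ->
  vlab adj (fun e => e \notin F) v = (v \notin cover F).
Proof.
move=> sF; rewrite /vlab big_all_cond inE.
apply/allP/negP => [H /existsP [e /andP[eF ve]] | H e _].
  have := H e (mem_index_enum e); rewrite /= (subsetP sF _ eF) ve /=.
  by rewrite eF.
apply/implyP => /andP[_ ve]; apply/negP => eF; apply: H; apply/existsP; exists e; by rewrite eF.
Qed.

Lemma tepc_of_reach c : Reach c ->
  #|T| + #|edges adj| <= c.*2 + 1 -> c.*2 <= #|T| + #|edges adj| + 1 ->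
  tepc_graph adj.
Proof.
move=> [F [sF HF]] H1 H2; pose f := fun e => e \notin F; exists f.
have ef0 : e_f adj f false = #|F|.
  rewrite /e_f; apply: eq_card => e; rewrite !inE /f.
  case eF: (e \in F); last by rewrite andbF.
  by move: (subsetP sF _ eF); rewrite inE => ->.
have vf0 : v_f adj f false = #|cover F|.
  rewrite /v_f; apply: eq_card => v; rewrite [in LHS]inE /f vlabF //.
  by case: (v \in cover F).
have A := ef_sum f; have B := vf_sum f.
rewrite /tepc_labeling /= ef0 vf0; rewrite ef0 in A; rewrite vf0 in B.
move: A B H1 H2 HF.
generalize (v_f adj f true) (e_f adj f true) #|cover F| #|F| #|T| #|edges adj| => x1 x2 x3 x4 x5 x6; lia.
Qed.


Definition Cc (F : {set {set T}}) := #|F| + #|cover F|.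
Definition selfcov (W : {set T}) := forall v, v \in W -> exists2 y, y \in W & adj v y.

Lemma edge2 x y : adj x y -> [set x; y] \in edges adj.
Proof. move=> a; rewrite inE; apply/existsP; exists x; apply/existsP; exists y; by rewrite a eqxx. Qed.

Lemma cover_mono (F G : {set {set T}}) : F \subset G -> cover F \subset cover G.
Proof.
move=> sFG; apply/subsetP => v; rewrite !inE => /existsP [e /andP[eF ve]].
apply/existsP; exists e; by rewrite (subsetP sFG _ eF) ve.
Qed.

Lemma Ein_edges (W : {set T}) : Ein W \subset edges adj.
Proof. apply/subsetP => e; rewrite inE; by case/andP. Qed.

Lemma cover_Ein (W : {set T}) : cover (Ein W) \subset W.
Proof.
apply/subsetP => v; rewrite inE => /existsP [e /andP[]]; rewrite inE => /andP[_ sW] ve.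
exact: (subsetP sW).
Qed.

Lemma cover_Ein_eq (W : {set T}) : selfcov W -> cover (Ein W) = W.
Proof.
move=> sc; apply/eqP; rewrite eqEsubset cover_Ein; apply/subsetP => v vW.
have [y yW a] := sc v vW; rewrite inE; apply/existsP; exists [set v; y].
apply/andP; split; last by rewrite !inE eqxx.
rewrite inE edge2 //=; apply/subsetP => z; rewrite !inE.
by case/orP => /eqP ->.
Qed.

Lemma Ein_mono (W Wp : {set T}) : W \subset Wp -> Ein W \subset Ein Wp.
Proof.
move=> s; apply/subsetP => e; rewrite !inE => /andP[-> sW] /=; exact: subset_trans sW s.
Qed.

Lemma selfcov_add (W : {set T}) w x : selfcov W -> x \in W -> adj w x -> adj x w -> selfcov (w |: W).
Proof.
move=> sc xW a1 a2 v; rewrite !inE => /orP[/eqP -> | vW].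
  by exists x; rewrite // !inE xW orbT.
have [y yW a] := sc v vW; by exists y; rewrite // !inE yW orbT.
Qed.


Lemma step_reach (W : {set T}) w x (R : {set T}) c0 :
  selfcov W -> w \notin W -> x \in W -> adj x w -> R \in Ein W ->
  (forall v, v \in R -> exists2 e, e \in Ein W & (e != R) && (v \in e)) ->
  (forall c, c0 <= c <= Cc (Ein W) -> Reach c) ->
  forall c, c0 <= c <= Cc (Ein (w |: W)) -> Reach c.
Proof.
move=> sc wW xW axw RE Rred IH c /andP[h1 h2].
have [le|lt] := leqP c (Cc (Ein W)); first by apply: IH; rewrite h1 le.
have cW := cover_Ein_eq sc.
move: lt; rewrite /Cc cW => lt.
pose e0 := [set x; w].
have e0E : e0 \in edges adj by apply: edge2.
have e0W : e0 \notin Ein W.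
  rewrite inE negb_and; apply/orP; right; apply/negP => /subsetP s.
  by move: (s w); rewrite !inE eqxx orbT => /(_ isT); apply/negP.
have sEW : Ein W \subset Ein (w |: W) by apply: Ein_mono; apply: subsetUr.
have e0W' : e0 \in Ein (w |: W).
  rewrite inE e0E /=; apply/subsetP => z; rewrite !inE => /orP[/eqP ->|->];
    by rewrite ?xW ?eqxx ?orbT.
have cov1 : w |: W \subset cover (e0 |: Ein W).
  apply/subsetP => z; rewrite !inE => /orP[/eqP ->|zW].
    by apply/existsP; exists e0; rewrite !inE eqxx /= /e0 ?inE ?eqxx ?orbT.
  by move: (subsetP (cover_mono (subsetUr [set e0] (Ein W))) z); rewrite cW inE => /(_ zW).
have cov2 (H : {set {set T}}) : H \subset Ein (w |: W) -> cover H \subset w |: W.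
  by move=> sH; apply: subset_trans (cover_Ein _); apply: cover_mono.
have [eq1|gt1] := eqVneq c (#|Ein W| + #|W|).+1.
  exists (e0 |: (Ein W :\ R)); split.
    apply/subsetP => e /setU1P [-> //|/setD1P [_ eE]]; exact: (subsetP (Ein_edges W)).
  have cG : cover (e0 |: (Ein W :\ R)) = w |: W.
    apply/eqP; rewrite eqEsubset; apply/andP; split.
      apply: cov2; apply/subsetP => e /setU1P [-> //|/setD1P [_ eE]]; exact: (subsetP sEW).
    apply/subsetP => z; rewrite !inE => /orP[/eqP ->|zW].
      by apply/existsP; exists e0; rewrite !inE eqxx /= /e0 ?inE ?eqxx ?orbT.
    case zR: (z \in R).
      have [e eE /andP[eR ze]] := Rred z zR.
      apply/existsP; exists e; rewrite ze andbT; apply/setU1P; right; by apply/setD1P.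
    have : z \in cover (Ein W) by rewrite cW.
    rewrite inE => /existsP [e /andP[eE ze]]; apply/existsP; exists e.
    rewrite ze andbT; apply/setU1P; right; apply/setD1P; split => //.
    apply/negP => /eqP eR; by rewrite -eR ze in zR.
  rewrite cG (cardsU1 e0) (cardsU1 w) (negPf wW).
  have -> : e0 \in Ein W :\ R = false by rewrite inE (negPf e0W) andbF.
  have := cardsD1 R (Ein W); rewrite RE eq1 /=; move=> ->; unfold reverse_coercion in *; lia.
have := cardsU1 e0 (Ein W); rewrite e0W /= => cG2.
have cEW' : #|Ein (w |: W)| + #|w |: W| >= c.
  move: h2; rewrite /Cc => h2; apply: leq_trans h2 _; rewrite leq_add2l.
  apply: subset_leq_card; exact: cov2.
have [||H /andP[sGH sHE] cH] := @subset_interval_ _ (e0 |: Ein W) (Ein (w |: W)) (c - #|W| - 1).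
- apply/subsetP => e /setU1P [-> //|]; exact: (subsetP sEW).
- rewrite cG2; move: cEW' lt gt1; rewrite cardsU1 (negPf wW).
  set a := #|Ein W|; set b := #|W|; set d := #|Ein (w |: W)|; lia.
exists H; split; first exact: subset_trans sHE (Ein_edges _).
have -> : cover H = w |: W.
  apply/eqP; rewrite eqEsubset cov2 //=; apply: subset_trans cov1 _; exact: cover_mono.
rewrite cH cardsU1 (negPf wW); unfold reverse_coercion in *; lia.
Qed.


Lemma Ein_add (W : {set T}) w : symmetric adj -> irreflexive adj -> w \notin W ->
  #|Ein (w |: W)| = #|Ein W| + #|[set y in W | adj w y]|.
Proof.
move=> sy ir wW.
pose N := [set y in W | adj w y].
pose g := fun y => [set w; y].
have ginj : {in N &, injective g}.
  move=> y1 y2; rewrite !inE => /andP[y1W _] _ eq.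
  have : y1 \in g y2 by rewrite -eq /g !inE eqxx orbT.
  rewrite /g !inE => /orP[/eqP e|/eqP //]; by move: wW; rewrite -e y1W.
have cimg : #|g @: N| = #|N| by apply: card_in_imset.
have disj : Ein W :&: g @: N = set0.
  apply/setP => e; rewrite !inE; apply/negP => /andP[/andP[_ sW] /imsetP [y _ ee]].
  move: (subsetP sW w); rewrite ee; rewrite /g !inE eqxx /= => /(_ isT); by apply/negP.
have eqU : Ein (w |: W) = Ein W :|: g @: N.
  apply/eqP; rewrite eqEsubset; apply/andP; split; last first.
    rewrite subUset Ein_mono ?subsetUr //=; apply/subsetP => e /imsetP [y].
    rewrite inE => /andP[yW a] ->; rewrite inE edge2 //=.
    apply/subsetP => z; rewrite !inE => /orP[->//|/eqP ->]; by rewrite yW orbT.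
  apply/subsetP => e eIn; move: (eIn); rewrite inE => /andP[eE sW]; move: (eE); rewrite inE.
  case/existsP => x /existsP [y /andP[a /eqP ee]].
  have xs : x \in w |: W by apply: (subsetP sW); rewrite ee !inE eqxx.
  have ys : y \in w |: W by apply: (subsetP sW); rewrite ee !inE eqxx orbT.
  rewrite !inE in xs ys; move: xs ys.
  case: (eqVneq x w) => [xw|xw]; case: (eqVneq y w) => [yw|yw] /= xW yW.
  - by move: a; rewrite xw yw ir.
  - apply/setUP; right; apply/imsetP; exists y; first by rewrite inE yW -xw a.
    by rewrite ee /g xw.
  - apply/setUP; right; apply/imsetP; exists x; first by rewrite inE xW -yw sy a.
    by rewrite ee /g yw setUC.
  - apply/setUP; left; rewrite inE eE /= ee; apply/subsetP => z; rewrite !inE.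
    by case/orP => /eqP ->.
have := cardsUI (Ein W) (g @: N); rewrite -eqU disj cards0 addn0 => ->.
by rewrite cimg.
Qed.


Lemma reach3 x y : adj x y -> x != y -> Reach 3.
Proof.
move=> a xy; exists [set [set x; y]]; split.
  by apply/subsetP => e /set1P ->; apply: edge2.
have -> : cover [set [set x; y]] = [set x; y].
  apply/setP => z; rewrite inE; apply/existsP/idP => [[e /andP[]]|zi].
    by rewrite inE => /eqP ->.
  by exists [set x; y]; rewrite inE eqxx.
by rewrite cards1 cards2 xy.
Qed.

Lemma reach5 x y z : adj x y -> adj y z -> x != y -> y != z -> x != z -> Reach 5.
Proof.
move=> a1 a2 xy yz xz; exists [set [set x; y]; [set y; z]]; split.
  by apply/subsetP => e /set2P [] ->; apply: edge2.
have -> : cover [set [set x; y]; [set y; z]] = x |: [set y; z].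
  apply/setP => v; rewrite inE; apply/existsP/idP => [[e /andP[]]|vi].
    by rewrite !inE => /orP[] /eqP -> ; rewrite !inE => /orP[] ->; rewrite ?orbT.
  move: vi; rewrite !inE => /orP[vx|/orP[vy|vz]].
  - by exists [set x; y]; rewrite !inE eqxx vx.
  - by exists [set x; y]; rewrite !inE eqxx vy orbT.
  - by exists [set y; z]; rewrite !inE eqxx vz !orbT.
have ne : [set x; y] != [set y; z].
  apply/negP => /eqP e; have : x \in [set y; z] by rewrite -e !inE eqxx.
  by rewrite !inE (negPf xy) (negPf xz).
rewrite cards2 ne cardsU1 cards2 yz !inE (negPf xy) (negPf xz).
by [].
Qed.

Lemma not_tepc1 : #|edges adj| = 1 -> (forall v, exists2 e, e \in edges adj & v \in e) ->
  0 < #|T| -> ~ tepc_graph adj.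
Proof.
move=> E1 cov T0 [f [H1 H2]].
have [e0 Ee] : exists e0, edges adj = [set e0] by apply/cards1P; rewrite E1.
have A := ef_sum f; have B := vf_sum f.
case fe: (f e0).
  have ef0 : e_f adj f false = 0.
    apply/eqP; rewrite cards_eq0; apply/eqP/setP => e; rewrite Ee !inE.
    by case: eqP => // ->; rewrite fe.
  have vf0 : v_f adj f false = 0.
    apply/eqP; rewrite cards_eq0; apply/eqP/setP => v; rewrite !inE /vlab big_all_cond.
    apply/negbTE; rewrite eqbF_neg negbK; apply/allP => e _ /=; apply/implyP.
    rewrite Ee inE => /andP[/eqP -> _]; exact: fe.
  move: H2; rewrite ef0 vf0 in A B *; rewrite E1 in A; lia.
have ef0 : e_f adj f true = 0.
  apply/eqP; rewrite cards_eq0; apply/eqP/setP => e; rewrite Ee !inE.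
  by case: eqP => // ->; rewrite fe.
have vf0 : v_f adj f true = 0.
  apply/eqP; rewrite cards_eq0; apply/eqP/setP => v; rewrite !inE /vlab big_all_cond.
  rewrite eqb_id; apply/negbTE; apply/negP => /allP H.
  have [e eE ve] := cov v.
  have := H e (mem_index_enum e); rewrite /= eE ve /=; move: eE; rewrite Ee inE => /eqP ->.
  by rewrite fe.
move: H1; rewrite ef0 vf0 in A B *; rewrite E1 in A; lia.
Qed.

End Generic.




Section Corona.
Variables n' m' : nat.
Local Notation n := n'.+1.
Local Notation m := m'.+1.
Local Notation T := ('I_n + 'I_n * 'I_m)%type.
Local Notation adj := (corona_adj (@path_adj n) (@path_adj m)).

Lemma eqLL (x y : 'I_n) : (inl x == inl y :> T) = (x == y :> nat). Proof. by []. Qed.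
Lemma eqLR (x : 'I_n) p : (inl x == inr p :> T) = false. Proof. by []. Qed.
Lemma eqRL (x : 'I_n) p : (inr p == inl x :> T) = false. Proof. by []. Qed.
Lemma eqRR (x y : 'I_n) (a b : 'I_m) : (inr (x, a) == inr (y, b) :> T) = (x == y :> nat) && (a == b :> nat).
Proof. by []. Qed.
Lemma adjLL (x y : 'I_n) : adj (inl x) (inl y) = (x.+1 == y :> nat) || (y.+1 == x :> nat). Proof. by []. Qed.
Lemma adjLR (x y : 'I_n) b : adj (inl x) (inr (y, b)) = (x == y :> nat). Proof. by []. Qed.
Lemma adjRL (x y : 'I_n) b : adj (inr (y, b)) (inl x) = (y == x :> nat). Proof. by []. Qed.
Lemma adjRR (x y : 'I_n) (a b : 'I_m) : adj (inr (x, a)) (inr (y, b)) =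
  (x == y :> nat) && ((a.+1 == b :> nat) || (b.+1 == a :> nat)). Proof. by []. Qed.

Lemma adj_sym : symmetric adj.
Proof.
move=> [x|[x a]] [y|[y b]]; rewrite ?adjLL ?adjLR ?adjRL ?adjRR //; lia.
Qed.

Lemma adj_irr : irreflexive adj.
Proof. move=> [x|[x a]]; rewrite ?adjLL ?adjRR; lia. Qed.

Definition Wset (u j : nat) : {set T} :=
  [set v : T | match v with inl x => x <= u | inr (x, a) => (x < u) || ((x == u :> nat) && (a < j)) end].

Lemma inWL (x : 'I_n) u j : (inl x \in Wset u j) = (x <= u). Proof. by rewrite inE. Qed.
Lemma inWR (x : 'I_n) (a : 'I_m) u j : (inr (x, a) \in Wset u j) = (x < u) || ((x == u :> nat) && (a < j)).
Proof. by rewrite inE. Qed.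

Ltac simp := rewrite ?in_setU1 ?in_set1 ?in_set2 ?inWL ?inWR ?eqLL ?eqLR ?eqRL ?eqRR ?adjLL ?adjLR ?adjRL ?adjRR /= ?/path_adj -?val_eqE /=.

Lemma stepA_W u j (hu : u < n) (hj : j < m) :
  Wset u j.+1 = inr (Ordinal hu, Ordinal hj) |: Wset u j.
Proof. apply/setP => [[x|[x a]]]; simp; lia. Qed.

Lemma stepA_notin u j (hu : u < n) (hj : j < m) : inr (Ordinal hu, Ordinal hj) \notin Wset u j.
Proof. simp; lia. Qed.

Lemma stepA_nbr u j (hu : u < n) (hj : j < m) :
  #|[set y in Wset u j | adj (inr (Ordinal hu, Ordinal hj)) y]| = 1 + (0 < j).
Proof.
case: j hj => [|j] hj.
  have -> : 1 + (0 < 0) = 1 by [].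
  rewrite -(cards1 (inl (Ordinal hu) : T)); apply: eq_card => -[x|[x a]]; rewrite inE; simp; lia.
have hj' : j < m by lia.
have -> : 1 + (0 < j.+1) = 2 by [].
rewrite -[2](cards2 (inl (Ordinal hu) : T) (inr (Ordinal hu, Ordinal hj'))) /=.
apply: eq_card => -[x|[x a]]; rewrite inE; simp; lia.
Qed.

Lemma stepB_W u (hu : u.+1 < n) :
  Wset u.+1 0 = inl (Ordinal hu) |: Wset u m.
Proof. apply/setP => [[x|[x a]]]; simp; [lia | have := ltn_ord a; lia]. Qed.

Lemma stepB_notin u (hu : u.+1 < n) : inl (Ordinal hu) \notin Wset u m.
Proof. simp; lia. Qed.

Lemma stepB_nbr u (hu : u.+1 < n) :
  #|[set y in Wset u m | adj (inl (Ordinal hu)) y]| = 1.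
Proof.
have hu' : u < n by lia.
rewrite -(cards1 (inl (Ordinal hu') : T)); apply: eq_card => -[x|[x a]]; rewrite inE; simp; lia.
Qed.


Lemma chain (P : nat -> nat -> Prop) :
  (forall u j, u < n -> j < m -> P u j -> P u j.+1) ->
  (forall u, u.+1 < n -> P u m -> P u.+1 0) ->
  forall u0 j0, u0 < n -> j0 <= m -> P u0 j0 -> P n' m.
Proof.
move=> Ha Hb.
have inner : forall k u j, u < n -> j + k = m -> P u j -> P u m.
  elim=> [|k IH] u j hu hjk Pj; first by rewrite -hjk addn0.
  apply: (IH u j.+1) => //; first lia.
  apply: Ha => //; lia.
have outer : forall d u, u + d = n' -> P u m -> P n' m.
  elim=> [|d IH] u hud Pu; first by rewrite -hud addn0.
  apply: (IH u.+1); first lia.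
  apply: (inner m u.+1 0) => //; first lia.
  apply: Hb => //; lia.
move=> u0 j0 hu hj P0; apply: (outer (n' - u0) u0); first lia.
apply: (inner (m - j0) u0 j0) => //; lia.
Qed.

Lemma Ein0 : Ein adj set0 = set0.
Proof.
apply/setP => e; rewrite !inE; apply/negP => /andP[/existsP [x /existsP [y /andP[_ /eqP ->]]]].
by move/subsetP => /(_ x); rewrite !inE eqxx => /(_ isT).
Qed.

Lemma W00 : Wset 0 0 = inl (Ordinal (ltn0Sn n')) |: set0.
Proof. apply/setP => [[x|[x a]]]; rewrite ?inE; simp; lia. Qed.

Definition cnt u j := #|Ein adj (Wset u j)| + (0 < j) = 2 * (m * u) + 2 * j /\ #|Wset u j| = m * u + u + 1 + j.

Lemma cnt_stepA u j : u < n -> j < m -> cnt u j -> cnt u j.+1.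
Proof.
move=> hu hj [c1 c2]; rewrite /cnt (stepA_W hu hj) Ein_add ?stepA_notin //;
  last exact: adj_irr; last exact: adj_sym.
rewrite stepA_nbr cardsU1 stepA_notin; lia.
Qed.

Lemma cnt_stepB u : u.+1 < n -> cnt u m -> cnt u.+1 0.
Proof.
move=> hu [c1 c2]; rewrite /cnt (stepB_W hu) Ein_add ?stepB_notin //;
  last exact: adj_irr; last exact: adj_sym.
rewrite stepB_nbr cardsU1 stepB_notin mulnS; lia.
Qed.

Lemma cnt00 : cnt 0 0.
Proof.
rewrite /cnt W00 Ein_add ?Ein0 ?cards0 ?inE //; last exact: adj_irr; last exact: adj_sym.
rewrite cardsU1 cards0 inE.
have -> : [set y in set0 | adj (inl (Ordinal (ltn0Sn n'))) y] = set0.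
  by apply/setP => y; rewrite !inE.
by rewrite cards0 muln0.
Qed.

Lemma cnt_all : cnt n' m.
Proof. apply: (chain cnt_stepA cnt_stepB (u0 := 0) (j0 := 0)) => //; exact: cnt00. Qed.

Lemma W_all : Wset n' m = setT.
Proof. apply/setP => [[x|[x a]]]; rewrite in_setT; simp; [have := ltn_ord x; lia | have := ltn_ord x; have := ltn_ord a; lia]. Qed.

Lemma Ein_all : Ein adj setT = edges adj.
Proof. apply/setP => e; rewrite inE subsetT andbT. by []. Qed.


Definition inv (R : {set T}) c0 u j :=
  [/\ R \in Ein adj (Wset u j), selfcov adj (Wset u j),
      (forall v, v \in R -> exists2 e, e \in Ein adj (Wset u j) & (e != R) && (v \in e))
    & (forall c, c0 <= c <= Cc (Ein adj (Wset u j)) -> Reach adj c)].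

Lemma inv_step (R : {set T}) c0 (W : {set T}) w x :
  w \notin W -> x \in W -> adj x w -> adj w x ->
  [/\ R \in Ein adj W, selfcov adj W,
      (forall v, v \in R -> exists2 e, e \in Ein adj W & (e != R) && (v \in e))
    & (forall c, c0 <= c <= Cc (Ein adj W) -> Reach adj c)] ->
  [/\ R \in Ein adj (w |: W), selfcov adj (w |: W),
      (forall v, v \in R -> exists2 e, e \in Ein adj (w |: W) & (e != R) && (v \in e))
    & (forall c, c0 <= c <= Cc (Ein adj (w |: W)) -> Reach adj c)].
Proof.
move=> wW xW axw awx [RE sc red IH].
have sub : Ein adj W \subset Ein adj (w |: W) by apply: Ein_mono; apply: subsetUr.
split.
- exact: (subsetP sub).
- exact: (selfcov_add sc xW awx axw).
- move=> v vR; have [e eE ne] := red v vR; exists e => //; exact: (subsetP sub).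
- exact: (step_reach sc wW xW axw RE red IH).
Qed.

Lemma inv_stepA R c0 u j : u < n -> j < m -> inv R c0 u j -> inv R c0 u j.+1.
Proof.
move=> hu hj; rewrite /inv (stepA_W hu hj); apply: (inv_step (x := inl (Ordinal hu))).
- exact: stepA_notin.
- by simp.
- by simp.
- by simp.
Qed.

Lemma inv_stepB R c0 u : u.+1 < n -> inv R c0 u m -> inv R c0 u.+1 0.
Proof.
move=> hu; have hu' : u < n by lia.
rewrite /inv (stepB_W hu); apply: (inv_step (x := inl (Ordinal hu'))).
- exact: stepB_notin.
- by simp.
- simp; lia.
- simp; lia.
Qed.

Lemma selfcov_W u j : 0 < j -> selfcov adj (Wset u j).
Proof.
move=> j0 [x|[x a]]; simp => h.
- exists (inr (x, Ordinal (ltn0Sn m'))); simp; lia.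
- exists (inl x); simp; lia.
Qed.

Lemma inv_base R u j : 0 < j -> R \in Ein adj (Wset u j) ->
  (forall v, v \in R -> exists2 e, e \in Ein adj (Wset u j) & (e != R) && (v \in e)) ->
  inv R (Cc (Ein adj (Wset u j))) u j.
Proof.
move=> j0 RE red; split => //; first exact: selfcov_W.
move=> c hc; have -> : c = Cc (Ein adj (Wset u j)) by lia.
exists (Ein adj (Wset u j)); split => //; exact: Ein_edges.
Qed.

Lemma Ttot : #|{: T}| + #|edges adj| = (m * n' + n' + 1 + m) + (2 * (m * n') + 2 * m - 1).
Proof.
have [c1 c2] := cnt_all; rewrite W_all Ein_all cardsT in c1 c2.
rewrite c2; lia.
Qed.

Lemma reach_final R c0 u0 j0 : u0 < n -> j0 <= m -> inv R c0 u0 j0 ->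
  forall c, c0 <= c <= #|{: T}| + #|edges adj| -> Reach adj c.
Proof.
move=> hu hj I0.
have [_ sc _ IH] := chain (@inv_stepA R c0) (@inv_stepB R c0) hu hj I0.
move: sc IH; rewrite W_all Ein_all => sc IH c hc; apply: IH.
rewrite /Cc; move: (cover_Ein_eq sc); rewrite Ein_all => ->; rewrite cardsT; move: hc; set a := #|edges adj|; set b := #|{: T}|; lia.
Qed.

Lemma tepc_uphalf c0 (R : {set T}) u0 j0 : u0 < n -> j0 <= m -> inv R c0 u0 j0 ->
  c0.*2 <= #|{: T}| + #|edges adj| + 1 -> tepc_graph adj.
Proof.
move=> hu hj I0 hc.
have := uphalfK (#|{: T}| + #|edges adj|).
move: (reach_final hu hj I0 (c := uphalf (#|{: T}| + #|edges adj|))).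
move: hc; set N := #|{: T}| + #|edges adj| => hc Hr Hu.
apply: (@tepc_of_reach _ _ (uphalf N)).
- apply: Hr; apply/andP; split; first by rewrite geq_uphalf_double; lia.
  move: Hu; case: (odd N) => /= Hu; lia.
- change (N <= (uphalf N).*2 + 1); rewrite Hu; case: (odd N); lia.
- change ((uphalf N).*2 <= N + 1); rewrite Hu; case: (odd N); lia.
Qed.


Lemma tepc_c c : Reach adj c ->
  (m * n' + n' + 1 + m) + (2 * (m * n') + 2 * m - 1) <= c.*2 + 1 ->
  c.*2 <= (m * n' + n' + 1 + m) + (2 * (m * n') + 2 * m - 1) + 1 -> tepc_graph adj.
Proof. move=> H1 H2 H3; apply: (tepc_of_reach H1); rewrite Ttot //. Qed.

Lemma edges1 : n' = 0 -> m' = 0 -> #|edges adj| = 1.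
Proof.
move=> hn hm; have [c1 _] := cnt_all; rewrite W_all Ein_all in c1.
move: c1; rewrite hn hm /=; lia.
Qed.

Lemma nonisolated v : exists2 e, e \in edges adj & v \in e.
Proof.
case: v => [x|[x a]].
  exists [set inl x; inr (x, Ordinal (ltn0Sn m'))]; last by rewrite !inE eqxx.
  apply: edge2; simp; lia.
exists [set inl x; inr (x, a)]; last by rewrite !inE eqxx orbT.
apply: edge2; simp; lia.
Qed.

End Corona.

Ltac simp2 := rewrite ?in_setU1 ?in_set1 ?in_set2 ?inWL ?inWR ?eqLL ?eqLR ?eqRL ?eqRR ?adjLL ?adjLR ?adjRL ?adjRR /= ?/path_adj -?val_eqE /=.

Lemma case_big_m (n' m'' : nat) : ~ (n' = 0 /\ m'' <= 1) ->
  tepc_graph (corona_adj (@path_adj n'.+1) (@path_adj m''.+2)).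
Proof.
move=> hnm.
pose O : 'I_n'.+1 := ord0.
pose A0 : 'I_m''.+2 := ord0.
pose A1 : 'I_m''.+2 := Ordinal (isT : 1 < m''.+2).
pose R : {set ('I_n'.+1 + 'I_n'.+1 * 'I_m''.+2)%type} := [set inr (O, A0); inr (O, A1)].
have c02 : cnt n' m''.+1 0 2.
  apply: cnt_stepA => //; apply: cnt_stepA => //; exact: cnt00.
have I0 := @inv_base n' m''.+1 R 0 2 isT.
have := @tepc_uphalf n' m''.+1 _ R 0 2 isT isT; apply.
  apply: I0.
    rewrite inE edge2 /=; last by simp2.
    by apply/subsetP => z /set2P [] ->; simp2.
  move=> v /set2P [] -> .
    exists [set inl O; inr (O, A0)]; last first.
      apply/andP; split; last by rewrite !inE eqxx orbT.
      apply/negP => /eqP e.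
      suff : inl O \in R by rewrite !inE.
      by rewrite -e !inE eqxx.
    rewrite inE edge2 /=; last by simp2.
    by apply/subsetP => z /set2P [] ->; simp2.
  exists [set inl O; inr (O, A1)]; last first.
    apply/andP; split; last by rewrite !inE eqxx orbT.
      apply/negP => /eqP e.
    suff : inl O \in R by rewrite !inE.
    by rewrite -e !inE eqxx.
  rewrite inE edge2 /=; last by simp2.
  by apply/subsetP => z /set2P [] ->; simp2.
rewrite /Cc (cover_Ein_eq (@selfcov_W n' m''.+1 0 2 isT)).
move: c02 => [c1 c2]; rewrite Ttot c2.
move: c1; set a := #|Ein _ _|; move=> c1.
have : 1 <= n' \/ 2 <= m'' by lia.
case=> h.
  have : m''.+2 <= m''.+2 * n' by rewrite leq_pmulr.
  lia.
lia.
Qed.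

Lemma case_big_n (n'' : nat) :
  tepc_graph (corona_adj (@path_adj n''.+4) (@path_adj 1)).
Proof.
pose O : 'I_n''.+4 := ord0.
pose O1 : 'I_n''.+4 := Ordinal (isT : 1 < n''.+4).
pose A0 : 'I_1 := ord0.
pose R : {set ('I_n''.+4 + 'I_n''.+4 * 'I_1)%type} := [set inl O; inl O1].
have c11 : cnt n''.+3 0 1 1.
  apply: cnt_stepA => //; apply: cnt_stepB => //; apply: cnt_stepA => //; exact: cnt00.
have I0 := @inv_base n''.+3 0 R 1 1 isT.
have := @tepc_uphalf n''.+3 0 _ R 1 1 isT isT; apply.
  apply: I0.
    rewrite inE edge2 /=; last by simp2.
    by apply/subsetP => z /set2P [] ->; simp2.
  move=> v /set2P [] -> .
    exists [set inl O; inr (O, A0)]; last first.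
      apply/andP; split; last by rewrite !inE eqxx.
      apply/negP => /eqP e.
      suff : inr (O, A0) \in R by rewrite !inE.
      by rewrite -e !inE eqxx orbT.
    rewrite inE edge2 /=; last by simp2.
    by apply/subsetP => z /set2P [] ->; simp2.
  exists [set inl O1; inr (O1, A0)]; last first.
    apply/andP; split; last by rewrite !inE eqxx.
    apply/negP => /eqP e.
    suff : inr (O1, A0) \in R by rewrite !inE.
    by rewrite -e !inE eqxx orbT.
  rewrite inE edge2 /=; last by simp2.
  by apply/subsetP => z /set2P [] ->; simp2.
rewrite /Cc (cover_Ein_eq (@selfcov_W n''.+3 0 1 1 isT)).
move: c11 => [c1 c2]; rewrite Ttot c2.
move: c1; set a := #|Ein _ _|; move=> c1.
lia.
Qed.

Lemma neg11 : ~ tepc_graph (corona_adj (@path_adj 1) (@path_adj 1)).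
Proof.
apply: not_tepc1.
- exact: edges1.
- exact: nonisolated.
- by apply/card_gt0P; exists (inl ord0).
Qed.

Lemma small12 : tepc_graph (corona_adj (@path_adj 1) (@path_adj 2)).
Proof.
apply: (@tepc_c 0 1 3) => //.
apply: (@reach3 _ _ (inl ord0) (inr (ord0, ord0))) => //.
Qed.

Lemma small21 : tepc_graph (corona_adj (@path_adj 2) (@path_adj 1)).
Proof.
apply: (@tepc_c 1 0 3) => //.
apply: (@reach3 _ _ (inl ord0) (inr (ord0, ord0))) => //.
Qed.

Lemma small13 : tepc_graph (corona_adj (@path_adj 1) (@path_adj 3)).
Proof.
apply: (@tepc_c 0 2 5) => //.
apply: (@reach5 _ _ (inr (ord0, ord0)) (inl ord0) (inr (ord0, Ordinal (isT : 1 < 3)))) => //.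
Qed.

Lemma small31 : tepc_graph (corona_adj (@path_adj 3) (@path_adj 1)).
Proof.
apply: (@tepc_c 2 0 5) => //.
apply: (@reach5 _ _ (inr (ord0, ord0)) (inl ord0) (inl (Ordinal (isT : 1 < 3)))) => //.
Qed.

Theorem theorem3p1 (n m : nat) : 1 <= n -> 1 <= m ->
  (tepc_graph (corona_adj (@path_adj n) (@path_adj m)) <-> ~ (n = 1 /\ m = 1)).
Proof.
case: n => [|n'] // _; case: m => [|m'] // _; split.
  move=> H [e1 e2]; move: H; case: e1 => ->; case: e2 => ->; exact: neg11.
move=> H; case: m' H => [|m''] H.
  case: n' H => [|[|[|n'']]] H.
  - by case: H.
  - exact: small21.
  - exact: small31.
  - exact: case_big_n.
case: m'' H => [|[|m3]] H.
- case: n' H => [|n'] H; first exact: small12.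
  apply: case_big_m; lia.
- case: n' H => [|n'] H; first exact: small13.
  apply: case_big_m; lia.
- apply: case_big_m; lia.
Qed.
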